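(* Suppose that $$\forall\,\varepsilon>0\;\exists\,\delta>0\ \text{such that}\ j(\varphi,\psi)\le\varepsilon\ \ \forall\,(\varphi,\psi)\in U_+\ \text{with}\ \|\varphi\|_0\le\delta .$$ If $q(0)<0$, then for every solution $(w,v)=(w,v)^\phi$, $\phi\in X_+$, of $w'(t)=q(v(t))w(t)$, $v'(t)=j(w_t,v_t)-\mu v(t)$ one has $w(t)\to0$ as $t\to\infty$.
   Context: Let $h>0$, $R_-<0$, $I=(R_-,\infty)$, $q:I\to\mathbb{R}$, $\mu>0$, $U=C^1([-h,0],\mathbb{R})\times C^1([-h,0],I)$, $j:U\to\mathbb{R}$, $U_+=C^1([-h,0],\mathbb{R}_+^2)$, $\|\cdot\|_0$ the sup-norm; $x_t(s)=x(t+s)$. Define $F(\varphi,\psi)=(q(\psi(0))\varphi(0),\,j(\varphi,\psi)-\mu\psi(0))$ and $X_+=\{\phi\in C^1([-h,0],\mathbb{R}_+^2):\phi'(0)=F(\phi)\}\neq\emptyset$. Assume: $j$ is $C^1$ on $U$ with each derivative extending to a linear map on $C([-h,0],\mathbb{R}^2)$ depending continuously on $(\phi,\chi)$; for every bounded $B\subset U_+$ there is $L_B$ with $|j(\phi)-j(\chi)|\le L_B\|\phi-\chi\|_0$ on $B$; $j\ge0$ on $U_+$; $j(B_1\times B_2)$ is bounded whenever $B_1\times B_2\subset U_+$ with $B_1$ bounded; $q$ is bounded and $C^1$; and $q(s)<0$ for all $s>0$. Solutions from $X_+$ exist globally and remain nonnegative. *)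

(* Defs.v *)
From Stdlib Require Import Reals Lra.
Open Scope R_scope.

Definition inI (a b x : R) : Prop := a <= x <= b.

(* f is C^1 on the closed interval [a,b] with derivative df:
   df is continuous on [a,b] (relative to [a,b]) and df x is the derivative
   of f at x relative to [a,b] (one-sided at the endpoints). *)
Definition C1_on (a b : R) (f df : R -> R) : Prop :=
  (forall x, inI a b x -> forall eps, 0 < eps -> exists del, 0 < del /\
     forall y, inI a b y -> Rabs (y - x) < del -> Rabs (df y - df x) < eps) /\
  (forall x, inI a b x -> forall eps, 0 < eps -> exists del, 0 < del /\
     forall y, inI a b y -> Rabs (y - x) < del ->
       Rabs (f y - f x - df x * (y - x)) <= eps * Rabs (y - x)).

(* History segment x_t(s) = x(t+s); only its values on [-h,0] are relevant. *)
Definition hist (x : R -> R) (t : R) : R -> R := fun s => x (t + s).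

Definition in_Uplus (h : R) (phi1 phi2 : R -> R) : Prop :=
  (exists d1 d2, C1_on (-h) 0 phi1 d1 /\ C1_on (-h) 0 phi2 d2) /\
  (forall s, inI (-h) 0 s -> 0 <= phi1 s /\ 0 <= phi2 s).

Definition C1_bounded_by (h r : R) (phi1 : R -> R) : Prop :=
  exists d, C1_on (-h) 0 phi1 d /\
    forall s, inI (-h) 0 s -> Rabs (phi1 s) + Rabs (d s) <= r.

Definition in_Xplus (h mu : R) (q : R -> R) (j : (R -> R) -> (R -> R) -> R)
    (phi1 phi2 : R -> R) : Prop :=
  exists d1 d2, C1_on (-h) 0 phi1 d1 /\ C1_on (-h) 0 phi2 d2 /\
    (forall s, inI (-h) 0 s -> 0 <= phi1 s /\ 0 <= phi2 s) /\
    d1 0 = q (phi2 0) * phi1 0 /\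
    d2 0 = j phi1 phi2 - mu * phi2 0.

Definition is_solution (h Rm mu : R) (q : R -> R) (j : (R -> R) -> (R -> R) -> R)
    (phi1 phi2 w v : R -> R) : Prop :=
  (forall s, inI (-h) 0 s -> w s = phi1 s /\ v s = phi2 s) /\
  (forall t, -h <= t -> Rm < v t) /\
  exists dw dv,
    (forall T, 0 <= T -> C1_on (-h) T w dw /\ C1_on (-h) T v dv) /\
    (forall t, 0 <= t ->
       dw t = q (v t) * w t /\
       dv t = j (hist w t) (hist v t) - mu * v t).

(* Main.v *)
Require Import Defs.
From Stdlib Require Import Reals Lra.
Open Scope R_scope.

Definition relcont (a b : R) (f : R -> R) :=
  forall x, inI a b x -> forall eps, 0 < eps -> exists del, 0 < del /\
     forall y, inI a b y -> Rabs (y - x) < del -> Rabs (f y - f x) < eps.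

Lemma C1_relcont_d a b f df : C1_on a b f df -> relcont a b df.
Proof. intros [H _]; exact H. Qed.

Lemma C1_relcont a b f df : C1_on a b f df -> relcont a b f.
Proof.
  intros [_ H] x Hx eps Heps.
  destruct (H x Hx 1 Rlt_0_1) as [del [Hdel Hd]].
  set (k := Rabs (df x) + 1).
  assert (Hk : 0 < k) by (unfold k; pose proof (Rabs_pos (df x)); lra).
  exists (Rmin del (eps / k)). split.
  - apply Rmin_glb_lt; [lra| apply Rdiv_lt_0_compat; lra].
  - intros y Hy Hyx.
    assert (H1 : Rabs (y - x) < del) by (eapply Rlt_le_trans; [exact Hyx| apply Rmin_l]).
    assert (H2 : Rabs (y - x) < eps / k) by (eapply Rlt_le_trans; [exact Hyx| apply Rmin_r]).
    specialize (Hd y Hy H1).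
    assert (H3 : Rabs (df x * (y - x)) = Rabs (df x) * Rabs (y-x)) by apply Rabs_mult.
    assert (H4: Rabs (f y - f x) <= Rabs (f y - f x - df x * (y - x)) + Rabs (df x * (y - x))).
    { replace (f y - f x) with ((f y - f x - df x * (y - x)) + df x * (y - x)) at 1 by ring. apply Rabs_triang. }
    assert (E: eps / k * k = eps) by (field; lra).
    assert (H5 : k * Rabs (y - x) < eps) by nra.
    unfold k in H5. lra.
Qed.

Definition clamp a b x := Rmax a (Rmin b x).
Lemma clamp_in a b x : a <= b -> inI a b (clamp a b x).
Proof. intros; unfold clamp, inI, Rmax, Rmin; repeat destruct Rle_dec; lra. Qed.
Lemma clamp_id a b x : inI a b x -> clamp a b x = x.
Proof. unfold inI; intros; unfold clamp, Rmax, Rmin; repeat destruct Rle_dec; lra. Qed.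
Lemma clamp_lip a b x y : a <= b -> Rabs (clamp a b y - clamp a b x) <= Rabs (y - x).
Proof. intros; unfold clamp, Rmax, Rmin; repeat destruct Rle_dec; unfold Rabs; repeat destruct Rcase_abs; lra. Qed.

Lemma relcont_bounded a b f : a <= b -> relcont a b f ->
  exists B, forall x, inI a b x -> Rabs (f x) <= B.
Proof.
  intros Hab Hc.
  set (g := fun x => Rabs (f (clamp a b x))).
  assert (Hg : forall c, a <= c <= b -> continuity_pt g c).
  { intros c _. unfold continuity_pt, continue_in, limit1_in, limit_in. intros eps Heps.
    destruct (Hc (clamp a b c) (clamp_in a b c Hab) eps Heps) as [del [Hdel Hd]].
    exists del. split; [exact Hdel|]. intros y [_ Hy]. simpl in *. unfold R_dist in *.
    unfold g. eapply Rle_lt_trans; [apply Rabs_triang_inv2|].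
    apply Hd; [apply clamp_in; auto|].
    eapply Rle_lt_trans; [apply clamp_lip; auto| exact Hy]. }
  destruct (continuity_ab_maj g a b Hab Hg) as [Mx [HM _]].
  exists (g Mx). intros x Hx. rewrite <- (clamp_id a b x Hx). apply HM.
  unfold inI in *. pose proof (clamp_in a b x Hab). unfold inI in H. lra.
Qed.

Lemma C1_deriv a b f df x : C1_on a b f df -> a < x < b -> derivable_pt_lim f x (df x).
Proof.
  intros [_ H] Hx eps Heps.
  destruct (H x (conj (Rlt_le _ _ (proj1 Hx)) (Rlt_le _ _ (proj2 Hx))) (eps/2) ltac:(lra)) as [del [Hdel Hd]].
  assert (Hp : 0 < Rmin del (Rmin (x - a) (b - x))) by (repeat apply Rmin_glb_lt; lra).
  exists (mkposreal _ Hp). intros hh Hh0 Hhh. simpl in Hhh.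
  pose proof (Rmin_l del (Rmin (x-a) (b-x))).
  pose proof (Rmin_r del (Rmin (x-a) (b-x))). pose proof (Rmin_l (x-a) (b-x)). pose proof (Rmin_r (x-a) (b-x)).
  assert (Hy : inI a b (x + hh)).
  { unfold inI. unfold Rabs in Hhh; destruct Rcase_abs in Hhh; lra. }
  assert (Hr : Rabs (x + hh - x) < del). { replace (x+hh-x) with hh by ring. lra. }
  specialize (Hd _ Hy Hr). replace (x + hh - x) with hh in Hd by ring.
  replace ((f (x + hh) - f x) / hh - df x) with ((f (x + hh) - f x - df x * hh) / hh) by (field; auto).
  unfold Rdiv. rewrite Rabs_mult, Rabs_inv.
  assert (0 < Rabs hh) by (apply Rabs_pos_lt; auto).
  apply (Rmult_le_compat_r (/ Rabs hh)) in Hd; [|left; apply Rinv_0_lt_compat; auto].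
  replace (eps / 2 * Rabs hh * / Rabs hh) with (eps/2) in Hd by (field; lra). lra.
Qed.

Lemma C1_shift a b f df c a' b' : C1_on a b f df -> a <= c + a' -> c + b' <= b ->
  C1_on a' b' (fun s => f (c + s)) (fun s => df (c + s)).
Proof.
  intros [H1 H2] Ha Hb. unfold inI in *. split.
  - intros x Hx eps Heps. destruct (H1 (c+x) ltac:(unfold inI in *; lra) eps Heps) as [del [Hd Hdd]].
    exists del; split; auto. intros y Hy Hyx. apply Hdd; [unfold inI in *; lra|].
    replace (c+y-(c+x)) with (y-x) by ring; auto.
  - intros x Hx eps Heps. destruct (H2 (c+x) ltac:(unfold inI in *; lra) eps Heps) as [del [Hd Hdd]].
    exists del; split; auto. intros y Hy Hyx.
    assert (Hy' : inI a b (c+y)) by (unfold inI in *; lra).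
    assert (Hyx' : Rabs (c+y-(c+x)) < del) by (replace (c+y-(c+x)) with (y-x) by ring; auto).
    specialize (Hdd _ Hy' Hyx'). replace (c+y-(c+x)) with (y-x) in Hdd by ring. exact Hdd.
Qed.
Theorem lemma13
  (h Rm mu : R) (q : R -> R) (j : (R -> R) -> (R -> R) -> R)
  (Hh : 0 < h) (HRm : Rm < 0) (Hmu : 0 < mu)
  (Hj_loc : forall f1 f2 g1 g2,
     (forall s, inI (-h) 0 s -> f1 s = g1 s /\ f2 s = g2 s) ->
     j f1 f2 = j g1 g2)
  (Hq_C1 : exists dq, forall s, Rm < s ->
     derivable_pt_lim q s (dq s) /\ continuity_pt dq s)
  (Hq_bdd : exists M, forall s, Rm < s -> Rabs (q s) <= M)
  (Hq_neg : forall s, 0 < s -> q s < 0)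
  (Hj_lip : forall r, exists L, forall f1 f2 g1 g2,
     in_Uplus h f1 f2 -> in_Uplus h g1 g2 ->
     C1_bounded_by h r f1 -> C1_bounded_by h r f2 ->
     C1_bounded_by h r g1 -> C1_bounded_by h r g2 ->
     forall d, (forall s, inI (-h) 0 s ->
                  Rabs (f1 s - g1 s) <= d /\ Rabs (f2 s - g2 s) <= d) ->
     Rabs (j f1 f2 - j g1 g2) <= L * d)
  (Hj_nonneg : forall f1 f2, in_Uplus h f1 f2 -> 0 <= j f1 f2)
  (Hj_bdd : forall r, exists K, forall f1 f2,
     in_Uplus h f1 f2 -> C1_bounded_by h r f1 -> Rabs (j f1 f2) <= K)
  (Hsmall : forall eps, 0 < eps -> exists del, 0 < del /\
     forall f1 f2, in_Uplus h f1 f2 ->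
       (forall s, inI (-h) 0 s -> Rabs (f1 s) <= del) ->
       j f1 f2 <= eps)
  (Hq0 : q 0 < 0)
  (phi1 phi2 : R -> R) (Hphi : in_Xplus h mu q j phi1 phi2)
  (w v : R -> R) (Hsol : is_solution h Rm mu q j phi1 phi2 w v)
  (Hnonneg : forall t, -h <= t -> 0 <= w t /\ 0 <= v t) :
  forall eps, 0 < eps -> exists T, forall t, T <= t -> Rabs (w t) < eps.
Proof.
  destruct Hsol as [Hinit [Hvdom [dw [dv [HC1 Hode]]]]].
  destruct Hq_bdd as [M HM].
  destruct Hq_C1 as [dq Hdq].
  assert (qneg : forall s, 0 <= s -> q s < 0).
  { intros s Hs. destruct (Req_dec s 0) as [->|]; auto. apply Hq_neg; lra. }
  assert (Hderw : forall c, 0 <= c -> derivable_pt_lim w c (dw c)).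
  { intros c Hc. apply (C1_deriv (-h) (c+1) w dw); [apply HC1; lra| lra]. }
  assert (Hderv : forall c, 0 <= c -> derivable_pt_lim v c (dv c)).
  { intros c Hc. apply (C1_deriv (-h) (c+1) v dv); [apply HC1; lra| lra]. }
  assert (dwle : forall c, 0 <= c -> dw c <= 0).
  { intros c Hc. destruct (Hode c Hc) as [-> _].
    pose proof (qneg (v c) (proj2 (Hnonneg c ltac:(lra)))).
    pose proof (proj1 (Hnonneg c ltac:(lra))). nra. }
  assert (Hmono : forall t1 t2, 0 <= t1 <= t2 -> w t2 <= w t1).
  { intros t1 t2 Ht. destruct (Req_dec t1 t2) as [->|Hne]; [lra|].
    destruct (MVT_cor2 w dw t1 t2 ltac:(lra)) as [c [Hc1 Hc2]].
    { intros c Hc. apply Hderw. lra. }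
    pose proof (dwle c ltac:(lra)). nra. }
  destruct (HC1 0 (Rle_refl 0)) as [HC1w HC1v].
  destruct (relcont_bounded (-h) 0 w ltac:(lra) (C1_relcont _ _ _ _ HC1w)) as [Bw HBw].
  destruct (relcont_bounded (-h) 0 dw ltac:(lra) (C1_relcont_d _ _ _ _ HC1w)) as [Dw HDw].
  set (r := Bw + Dw + M * Bw).
  assert (HU : forall t, 0 <= t -> in_Uplus h (hist w t) (hist v t)).
  { intros t Ht. destruct (HC1 t Ht) as [H1 H2]. split.
    - exists (hist dw t), (hist dv t). unfold hist. split; apply C1_shift with (-h) t; lra || auto.
    - intros s Hs. unfold inI in Hs. unfold hist. apply Hnonneg. lra. }
  assert (HB : forall t, 0 <= t -> C1_bounded_by h r (hist w t)).
  { intros t Ht. exists (hist dw t). split.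
    - destruct (HC1 t Ht) as [H1 H2]. unfold hist. apply C1_shift with (-h) t; lra || auto.
    - intros s Hs. unfold inI in Hs. unfold hist.
      assert (B0 : Rabs (w 0) <= Bw) by (apply HBw; unfold inI; lra).
      assert (Hw1 : Rabs (w (t+s)) <= Bw).
      { destruct (Rle_dec (t+s) 0). apply HBw; unfold inI; lra.
        pose proof (Hmono 0 (t+s) ltac:(lra)). pose proof (Hnonneg (t+s) ltac:(lra)).
        pose proof (Hnonneg 0 ltac:(lra)).
        rewrite Rabs_right in *; lra. }
      assert (Hw2 : Rabs (dw (t+s)) <= Dw + M * Bw).
      { destruct (Rle_dec (t+s) 0).
        - pose proof (HDw (t+s) ltac:(unfold inI; lra)).
          assert (0 <= M) by (pose proof (HM 0 HRm); pose proof (Rabs_pos (q 0)); lra).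
          pose proof (Rabs_pos (w (t+s))). nra.
        - destruct (Hode (t+s) ltac:(lra)) as [-> _]. rewrite Rabs_mult.
          pose proof (HM (v (t+s)) (Hvdom (t+s) ltac:(lra))).
          pose proof (HDw 0 ltac:(unfold inI; lra)). pose proof (Rabs_pos (dw 0)).
          pose proof (Rabs_pos (w (t+s))). pose proof (Rabs_pos (q (v (t+s)))). nra. }
      unfold r. lra. }
  destruct (Hj_bdd r) as [K HK].
  assert (HjK : forall t, 0 <= t -> j (hist w t) (hist v t) <= K).
  { intros t Ht. pose proof (HK _ _ (HU t Ht) (HB t Ht)). unfold Rabs in H; destruct Rcase_abs in H; lra. }
  set (V := Rmax (K/mu) (v 0)).
  assert (HV : forall t, 0 <= t -> v t <= V).
  { intros t Ht. destruct (Req_dec t 0) as [->|Hne]; [unfold V; apply Rmax_r|].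
    set (g := fun s => (v s - K/mu) * exp (mu * s)).
    set (g' := fun s => (dv s - 0) * exp (mu * s) + (v s - K/mu) * (exp (mu * s) * (mu * 1))).
    assert (Hg : forall c, 0 <= c -> derivable_pt_lim g c (g' c)).
    { intros c Hc. unfold g, g'.
      apply (derivable_pt_lim_mult (fun s => v s - K/mu) (fun s => exp (mu * s))).
      - apply (derivable_pt_lim_minus v (fct_cte (K/mu))); [auto|apply derivable_pt_lim_const].
      - apply (derivable_pt_lim_comp (mult_real_fct mu id) exp).
        + apply derivable_pt_lim_scal, derivable_pt_lim_id.
        + apply derivable_pt_lim_exp. }
    destruct (MVT_cor2 g g' 0 t ltac:(lra)) as [c [Hc1 Hc2]].
    { intros c Hc. apply Hg. lra. }
    assert (Hg'c : g' c <= 0).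
    { unfold g'. destruct (Hode c ltac:(lra)) as [_ ->]. pose proof (HjK c ltac:(lra)).
      pose proof (exp_pos (mu * c)).
      assert (E: (j (hist w c) (hist v c) - mu * v c - 0) * exp (mu * c) +
        (v c - K / mu) * (exp (mu * c) * (mu * 1)) = (j (hist w c) (hist v c) - K) * exp (mu * c)) by (field; lra).
      rewrite E. nra. }
    unfold g in Hc1. rewrite Rmult_0_r, exp_0 in Hc1.
    pose proof (exp_ineq1 (mu * t) ltac:(nra)).
    assert ((v t - K / mu) * exp (mu * t) <= v 0 - K/mu) by nra.
    pose proof (Rmax_l (K/mu) (v 0)). pose proof (Rmax_r (K/mu) (v 0)). 
    destruct (Rle_dec (v t - K/mu) 0). unfold V; lra.
    apply Rnot_le_lt in n. assert (1 <= exp (mu * t)) by nra. assert (v t - K/mu <= (v t - K / mu) * exp (mu * t)) by nra. unfold V; lra. }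
  assert (HV0 : 0 <= V) by (unfold V; pose proof (Rmax_r (K/mu) (v 0)); pose proof (Hnonneg 0 ltac:(lra)); lra).
  destruct (continuity_ab_maj q 0 V HV0) as [Mx [HMx HMxI]].
  { intros c Hc. destruct (Hdq c ltac:(lra)) as [Hd _].
    apply derivable_continuous_pt. exists (dq c). exact Hd. }
  set (qm := q Mx).
  assert (Hqm : qm < 0) by (apply qneg; lra).
  assert (Hdw : forall c, 0 <= c -> dw c <= qm * w c).
  { intros c Hc. destruct (Hode c Hc) as [-> _].
    pose proof (Hnonneg c ltac:(lra)). pose proof (HV c Hc).
    pose proof (HMx (v c) ltac:(lra)). fold qm in H1. nra. }
  intros eps Heps.
  pose proof (Hnonneg 0 ltac:(lra)) as [Hw0 _].
  exists (w 0 / (- qm * eps) + 1). intros t Ht.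
  assert (HT0 : 0 <= w 0 / (- qm * eps)) by (apply Rmult_le_pos; [lra| left; apply Rinv_0_lt_compat; nra]).
  pose proof (Hnonneg t ltac:(lra)) as [Hwt _].
  rewrite Rabs_right by lra.
  apply Rnot_le_lt. intro Hge.
  destruct (MVT_cor2 w dw 0 t ltac:(lra)) as [c [Hc1 Hc2]].
  { intros c Hc. apply Hderw. lra. }
  pose proof (Hmono c t ltac:(lra)).
  pose proof (Hdw c ltac:(lra)).
  assert (dw c <= qm * eps) by nra.
  assert (E : w 0 / (- qm * eps) * (- qm * eps) = w 0) by (field; nra).
  assert (Hp : 0 < - qm * eps) by nra. assert (0 <= (- qm * eps) * (t - (w 0 / (- qm * eps) + 1))) by (apply Rmult_le_pos; lra). assert (qm * eps * t < - w 0) by nra.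
  nra.
Qed.
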